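(* Let $F$ be a connected graph of order at least $2$ with vertices $x_1,\dots,x_{|V(F)|}$. For each $i$, take a new graph $T_i\in\{C_{4,2},C_{5,1}\}$ (all vertex-disjoint from each other and from $F$) and identify the leaf of $T_i$ with $x_i$; call the resulting graph $G_F$. Then $\gamma^{d}_2(G_F)=\frac{|V(G_F)|}{3}$.
   Context: All graphs are finite and simple. A set $S$ of vertices of a graph $G$ is a disjunctive dominating set of $G$ if every vertex not in $S$ is adjacent to a vertex of $S$ or has at least two vertices of $S$ at distance exactly $2$ from it in $G$. The disjunctive domination number $\gamma^{d}_2(G)$ is the minimum cardinality of a disjunctive dominating set of $G$. For $s\geq 3$ and $t\geq 1$, $C_{s,t}$ denotes the graph obtained from a cycle $C_s$ and a path with $t$ edges by identifying one end vertex of the path with a vertex of the cycle; the other end vertex of the path (of degree $1$) is called the leaf of $C_{s,t}$. Thus $C_{4,2}$ and $C_{5,1}$ each have $6$ vertices. *)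

(* Defs.v *)
From mathcomp Require Import all_boot.
Set Implicit Arguments. Unset Strict Implicit. Unset Printing Implicit Defensive.

(* Simple graphs: vertex set a finType T, adjacency a symmetric irreflexive
   boolean relation e. *)

Section Graphs.
Variable T : finType.
Variable e : rel T.

Definition dist2 (u v : T) : bool :=
  [&& u != v, ~~ e u v & [exists w, e u w && e w v]].

Definition disj_dom (S : {set T}) : bool :=
  [forall v, (v \notin S) ==>
     ([exists u in S, e v u] || (2 <= #|[set u in S | dist2 v u]|))].

(* disjunctive domination number: minimum cardinality of a disjunctive
   dominating set ([set: T] is one, so the minimum is attained). *)
Definition gamma_d2 : nat :=
  #|[arg min_(S < [set: T] | disj_dom S) #|S|]|.
End Graphs.

(* C_{s,t} on vertices 0 .. s+t-1: the path 0 - 1 - ... - t (t edges, leaf 0)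
   and the cycle t - (t+1) - ... - (t+s-1) - t. *)
Definition cst_adj (s t i j : nat) : bool :=
  [|| (i.+1 == j) && (j < s + t), (j.+1 == i) && (i < s + t),
      (i == t) && (j == t + s - 1) | (j == t) && (i == t + s - 1)].

(* Both C_{4,2} and C_{5,1} have 6 vertices; true selects C_{4,2},
   false selects C_{5,1}. Vertex 0 is the leaf. *)
Definition T_adj (b : bool) (i j : 'I_6) : bool :=
  if b then cst_adj 4 2 i j else cst_adj 5 1 i j.

(* The graph G_F: vertex (x, 0) is x itself (identified with the leaf of T_x),
   vertices (x, i), i > 0, are the other vertices of the copy T_x. *)
Definition GF_adj (T : finType) (e : rel T) (kind : T -> bool)
  : rel (T * 'I_6) :=
  fun p q =>
    ((p.2 == ord0) && (q.2 == ord0) && e p.1 q.1)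
    || ((p.1 == q.1) && T_adj (kind p.1) p.2 q.2).

(* Main.v *)
Require Import Defs.
From mathcomp Require Import all_boot.
Set Implicit Arguments. Unset Strict Implicit.

Lemma card_ord6 (P : nat -> bool) : #|[set j : 'I_6 | P j]| = count P (iota 0 6).
Proof.
rewrite -val_enum_ord count_map enumT cardE /enum_mem size_filter.
by apply: eq_count => j /=; rewrite inE.
Qed.

Lemma card_split (T : finType) (S : {set T * 'I_6}) :
  #|S| = \sum_(x : T) #|[set j : 'I_6 | (x, j) \in S]|.
Proof.
rewrite -sum1_card big_mkcond /=.
transitivity (\sum_(p : T * 'I_6) (if (p.1, p.2) \in S then 1 else 0)); first by apply: eq_bigr => -[x j].
rewrite -(pair_bigA _ (fun x j => if (x, j) \in S then 1 else 0)) /=.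
apply: eq_bigr => x _; rewrite -sum1_card [RHS]big_mkcond; apply: eq_bigr => j _; by rewrite inE.
Qed.

Definition tadj (b : bool) (i j : nat) := if b then cst_adj 4 2 i j else cst_adj 5 1 i j.
Definition ld2 b k j := [&& k != j, ~~ tadj b k j & has (fun m => tadj b k m && tadj b m j) (iota 0 6)].
Definition cond b (s : nat -> bool) k := [|| s k, has (fun j => s j && tadj b k j) (iota 0 6) | 2 <= count (fun j => s j && ld2 b k j) (iota 0 6)].

Lemma gadget b s0 s1 s2 s3 s4 s5 :
  let s := nth false [:: s0; s1; s2; s3; s4; s5] in
  [&& cond b s 2, cond b s 3, cond b s 4 & cond b s 5] -> 2 <= count s (iota 0 6).
Proof. by case: b s0 s1 s2 s3 s4 s5 => [] [] [] [] [] [] []. Qed.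

Lemma gadget' b (s : nat -> bool) :
  [&& cond b s 2, cond b s 3, cond b s 4 & cond b s 5] -> 2 <= count s (iota 0 6).
Proof. move=> H; have := @gadget b (s 0) (s 1) (s 2) (s 3) (s 4) (s 5); rewrite /cond /ld2 /=; apply; move: H; by rewrite /cond /ld2 /=. Qed.

Lemma tadj0 b k : 2 <= k -> k < 6 -> tadj b k 0 = false.
Proof. by case: b; case: k => [|[|[|[|[|[|k]]]]]]. Qed.

Section Main.
Variables (T : finType) (e : rel T) (kind : T -> bool).

Lemma local (S : {set T * 'I_6}) x k :
  disj_dom (GF_adj e kind) S -> 2 <= k -> k < 6 ->
  cond (kind x) (fun j => (x, inord j) \in S) k.
Proof.
move=> dS h2 h6; set s := fun j => _.
have vk : nat_of_ord (inord k : 'I_6) = k by rewrite inordK.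
move/forallP/(_ (x, inord k)): dS.
case: (boolP ((x, inord k) \in S)) => [inS _ | nS /= H].
  by rewrite /cond /s inS.
have n0 : ((inord k : 'I_6) == ord0) = false.
  apply/eqP => /(congr1 val) /=; rewrite vk => hk; by rewrite hk in h2.
case/orP: H => [/existsP [[y j] /andP [uS adj]] | H2].
  rewrite /GF_adj /= n0 /= in adj; move/andP: adj => [/eqP yx ad]; subst y.
  apply/orP; right; apply/orP; left; apply/hasP; exists (val j).
    by rewrite mem_iota ltn_ord.
  rewrite /s inord_val uS /=; move: ad; by rewrite /T_adj /tadj vk.
apply/orP; right; apply/orP; right.
rewrite -card_ord6; apply: leq_trans H2 _.
have sub : [set u in S | dist2 (GF_adj e kind) (x, inord k) u] \subset
    [set (x, j) | j in [set j : 'I_6 | s j && ld2 (kind x) k j]].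
  apply/subsetP => -[y j]; rewrite inE => /andP [uS d2].
  move/and3P: d2 => [neq nadj /existsP [[z m] /andP [a1 a2]]].
  rewrite /GF_adj /= n0 /= in a1; move/andP: a1 => [/eqP zx am]; subst z.
  have m0 : (m == ord0) = false.
    apply/eqP => m0; move: am; rewrite m0 /T_adj vk.
    by have := tadj0 (kind x) h2 h6; rewrite /tadj => ->.
  rewrite /GF_adj /= m0 /= in a2; move/andP: a2 => [/eqP xy mj]; subst y.
  apply/imsetP; exists j => //.
  rewrite inE /s inord_val uS /= /ld2.
  apply/and3P; split.
  - apply/negP => /eqP kj; move: neq; by rewrite kj inord_val eqxx.
  - rewrite /GF_adj /= n0 eqxx /= in nadj; move: nadj; by rewrite /T_adj /tadj vk.
  - apply/hasP; exists (val m); first by rewrite mem_iota ltn_ord.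
    move: am mj; rewrite /T_adj /tadj vk => -> //.
by rewrite (leq_trans (subset_leq_card sub)) // leq_imset_card.
Qed.

Lemma lower (S : {set T * 'I_6}) : disj_dom (GF_adj e kind) S -> 2 * #|T| <= #|S|.
Proof.
move=> dS; rewrite card_split mulnC -sum_nat_const; apply: leq_sum => x _.
have -> : #|[set j : 'I_6 | (x, j) \in S]| = #|[set j : 'I_6 | (fun n => (x, inord n) \in S) j]|.
  by apply: eq_card => j; rewrite !inE inord_val.
rewrite (card_ord6 (fun n => (x, inord n) \in S)); apply: gadget'.
by apply/and4P; split; apply: local.
Qed.

Definition pick b i := if b then (match i with 3 | 5 => 4 | _ => 1 end)
  else (match i with 4 => 3 | _ => 1 end).
Definition inS1 b j := (j == 1) || (j == if b then 4 else 3).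
Lemma up b i : i < 6 -> ~~ inS1 b i -> [&& inS1 b (pick b i), tadj b i (pick b i) & pick b i < 6].
Proof. by case: b; case: i => [|[|[|[|[|[|i]]]]]]. Qed.

Definition S1 := [set p : T * 'I_6 | inS1 (kind p.1) p.2].

Lemma dS1 : disj_dom (GF_adj e kind) S1.
Proof.
apply/forallP => -[x i]; apply/implyP; rewrite inE /= => ni.
have /and3P [a b c] := up (ltn_ord i) ni.
apply/orP; left; apply/existsP; exists (x, inord (pick (kind x) i)).
rewrite inE /= inordK // a /= /GF_adj /= eqxx /=; apply/orP; right.
move: b; by rewrite /T_adj /tadj inordK.
Qed.

Lemma cardS1 : #|S1| = 2 * #|T|.
Proof.
rewrite card_split mulnC -sum_nat_const; apply: eq_bigr => x _.
have -> : #|[set j : 'I_6 | (x, j) \in S1]| = #|[set j : 'I_6 | inS1 (kind x) j]|.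
  by apply: eq_card => j; rewrite !inE.
by rewrite card_ord6; case: (kind x).
Qed.
End Main.

Theorem mainTheorem3 (T : finType) (e : rel T)
  (e_sym : symmetric e) (e_irr : irreflexive e)
  (F_conn : forall x y : T, connect e x y)
  (F_order : 2 <= #|T|)
  (kind : T -> bool) :
  3 * gamma_d2 (GF_adj e kind) = #|{: T * 'I_6}|.
Proof.
rewrite /gamma_d2; case: arg_minnP.
  by apply/forallP => v; rewrite in_setT.
move=> S0 dS0 min0.
have lo := lower dS0.
have hi := min0 _ (dS1 e kind); rewrite cardS1 in hi.
have -> : #|S0| = 2 * #|T| by apply/eqP; rewrite eqn_leq hi lo.
by rewrite card_prod card_ord mulnA mulnC.
Qed.
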